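(* Let $n\ge2$, $1\le r\le n-1$, $\alpha,\beta,\gamma\in\mathbb{Z}_2^{n-r}$, $\alpha',\beta',\gamma'\in\mathbb{Z}_2^{r}$, $a=\alpha_{n-r-1}\oplus\beta_{n-r-1}\oplus\gamma_{n-r-1}$ and $a'=\alpha'_{r-1}\oplus\beta'_{r-1}\oplus\gamma'_{r-1}$. Then $$\mathrm{adp}^{\mathrm{XR}}_r(\alpha'\|\alpha,\beta'\|\beta\to\gamma\|\gamma')=\mathrm{padp}_{a',0}(\alpha,\beta,\gamma^{[a]})\,\mathrm{cadp}_a(\alpha'^{[a']},\beta',\gamma')+\mathrm{padp}_{\overline{a'},1}(\alpha,\beta,\gamma^{[a]})\,\mathrm{cadp}_a(\overline{\alpha'}^{[a']},\overline{\beta'},\gamma'),$$ where $\overline{a'}=a'\oplus1$.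
   Context: For $x\in\mathbb{Z}_2^m$, $x=(x_0,\dots,x_{m-1})$ is identified with the integer $\sum_i x_i2^{m-1-i}$; arithmetic on $\mathbb{Z}_2^n$ is modulo $2^n$. $\oplus$ is bitwise XOR, $x\lll r=(x_r,\dots,x_{n-1},x_0,\dots,x_{r-1})$, $\overline{x}$ is the bitwise complement, $x^{[a]}=x$ if $a=0$ and $\overline{x}$ if $a=1$, and $\alpha\|\beta$ is concatenation ($\alpha$ in the most significant positions). $\mathrm{adp}^{\mathrm{XR}}_r(\alpha,\beta\to\gamma)=4^{-n}\#\{(x,y)\in(\mathbb{Z}_2^n)^2: ((x+\alpha)\oplus(y+\beta))\lll r=((x\oplus y)\lll r)+\gamma\}$. Indices $0,\dots,7$ are identified with $\mathbb{Z}_2^3$ via $(p_0,p_1,p_2)\leftrightarrow4p_0+2p_1+p_2$; $e_0,\dots,e_7$ are the standard basis row vectors of $\mathbb{Q}^8$. $A_0$ is $\frac14$ times the $8\times8$ matrix with rows $(4,0,0,1,0,1,1,0)$, $(0,0,0,1,0,1,0,0)$, $(0,0,0,1,0,0,1,0)$, $(0,0,0,1,0,0,0,0)$, $(0,0,0,0,0,1,1,0)$, $(0,0,0,0,0,1,0,0)$, $(0,0,0,0,0,0,1,0)$, $(0,\dots,0)$, and $(A_k)_{i,j}=(A_0)_{i\oplus k,j\oplus k}$. For $\alpha,\beta,\gamma\in\mathbb{Z}_2^m$ let $\omega_i=4\alpha_i+2\beta_i+\gamma_i$. With $L_0=(1,0,1,0,1,0,1,0)$, $L_1=(0,1,0,1,0,1,0,1)$,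 $L_{0,0}=(1,1,0,0,0,0,0,0)$, $L_{0,1}=(0,0,1,1,0,0,0,0)$, $L_{1,0}=(0,0,0,0,1,1,0,0)$, $L_{1,1}=(0,0,0,0,0,0,1,1)$, define $\mathrm{cadp}_c(\alpha,\beta,\gamma)=L_cA_{\omega_0}\cdots A_{\omega_{m-1}}e_0^T$ and $\mathrm{padp}_{a,b}(\alpha,\beta,\gamma)=L_{a,b}A_{\omega_0}\cdots A_{\omega_{m-1}}e_0^T$. *)

(* Defs.v *)
From HB Require Import structures.
From mathcomp Require Import all_boot all_order all_algebra.
Set Implicit Arguments. Unset Strict Implicit. Unset Printing Implicit Defensive.
Import GRing.Theory Num.Theory.
Local Open Scope ring_scope.

(* Z_2^m : bit vectors x = (x_0, ..., x_{m-1}), x_0 most significant. *)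
Notation bv m := (m.-tuple bool).

Definition bv_val m (x : bv m) : nat :=
  (\sum_(i < m) (tnth x i : nat) * 2 ^ (m - i.+1))%N.

Definition bv_of_nat m (k : nat) : bv m :=
  [tuple odd ((k %% 2 ^ m) %/ 2 ^ (m - i.+1))%N | i < m].

Definition bv_add m (x y : bv m) : bv m := bv_of_nat m (bv_val x + bv_val y).

Definition bv_xor m (x y : bv m) : bv m := [tuple tnth x i (+) tnth y i | i < m].

(* x <<< r = (x_r, ..., x_{m-1}, x_0, ..., x_{r-1}) *)
Definition bv_rotl m (r : nat) (x : bv m) : bv m := rot_tuple r x.

Definition bv_compl m (x : bv m) : bv m := map_tuple negb x.
Definition bv_cond m (a : bool) (x : bv m) : bv m := if a then bv_compl x else x.

(* concatenation x || y (x in the most significant positions), as an element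
   of Z_2^n; used only when size x + size y = n. *)
Definition bv_cat n p q (x : bv p) (y : bv q) : bv n :=
  [tuple nth false (x ++ y) i | i < n].

Definition adpXR n (r : nat) (al be ga : bv n) : rat :=
  (#|[set xy : bv n * bv n |
      bv_rotl r (bv_xor (bv_add xy.1 al) (bv_add xy.2 be))
      == bv_add (bv_rotl r (bv_xor xy.1 xy.2)) ga]|%:R) / (4 ^+ n).

Definition A0_rows : seq (seq nat) :=
  [:: [:: 4; 0; 0; 1; 0; 1; 1; 0];
      [:: 0; 0; 0; 1; 0; 1; 0; 0];
      [:: 0; 0; 0; 1; 0; 0; 1; 0];
      [:: 0; 0; 0; 1; 0; 0; 0; 0];
      [:: 0; 0; 0; 0; 0; 1; 1; 0];
      [:: 0; 0; 0; 0; 0; 1; 0; 0];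
      [:: 0; 0; 0; 0; 0; 0; 1; 0];
      [:: 0; 0; 0; 0; 0; 0; 0; 0]].

Definition A0 : 'M[rat]_8 :=
  \matrix_(i < 8, j < 8) ((nth 0%N (nth [::] A0_rows i) j)%:R / 4).

(* XOR of indices in 'I_8, via (p0,p1,p2) <-> 4p0+2p1+p2 *)
Definition ord8_of_bits (p0 p1 p2 : bool) : 'I_8 :=
  inord (4 * p0 + 2 * p1 + p2)%N.
Definition bit0_8 (i : 'I_8) : bool := odd (i %/ 4)%N.
Definition bit1_8 (i : 'I_8) : bool := odd (i %/ 2)%N.
Definition bit2_8 (i : 'I_8) : bool := odd i.
Definition xor8 (i k : 'I_8) : 'I_8 :=
  ord8_of_bits (bit0_8 i (+) bit0_8 k) (bit1_8 i (+) bit1_8 k) (bit2_8 i (+) bit2_8 k).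

Definition Amat (k : 'I_8) : 'M[rat]_8 := \matrix_(i, j) A0 (xor8 i k) (xor8 j k).

Definition row8 (s : seq nat) : 'rV[rat]_8 := \row_(j < 8) (nth 0%N s j)%:R.

Definition L_c (c : bool) : 'rV[rat]_8 :=
  if c then row8 [:: 0; 1; 0; 1; 0; 1; 0; 1] else row8 [:: 1; 0; 1; 0; 1; 0; 1; 0].

Definition L_ab (a b : bool) : 'rV[rat]_8 :=
  match a, b with
  | false, false => row8 [:: 1; 1; 0; 0; 0; 0; 0; 0]
  | false, true  => row8 [:: 0; 0; 1; 1; 0; 0; 0; 0]
  | true, false  => row8 [:: 0; 0; 0; 0; 1; 1; 0; 0]
  | true, true   => row8 [:: 0; 0; 0; 0; 0; 0; 1; 1]
  end.

Definition e0T : 'cV[rat]_8 := delta_mx 0 0.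

Definition omega m (al be ga : bv m) (i : 'I_m) : 'I_8 :=
  ord8_of_bits (tnth al i) (tnth be i) (tnth ga i).

Definition Aprod m (al be ga : bv m) : 'M[rat]_8 :=
  \prod_(i < m) Amat (omega al be ga i).

Definition cadp (c : bool) m (al be ga : bv m) : rat :=
  (L_c c *m Aprod al be ga *m e0T) 0 0.

Definition padp (a b : bool) m (al be ga : bv m) : rat :=
  (L_ab a b *m Aprod al be ga *m e0T) 0 0.

(* Main.v *)
Require Import Defs.
From mathcomp Require Import all_boot all_order all_algebra.
From mathcomp Require Import zify ring lra.
Set Implicit Arguments. Unset Strict Implicit. Unset Printing Implicit Defensive.
Import GRing.Theory Num.Theory.


Fixpoint val_s (s : seq bool) : nat :=
  if s is b :: t then (b * 2 ^ size t + val_s t)%N else 0%N.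

Lemma val_s_lt s : (val_s s < 2 ^ size s)%N.
Proof.
elim: s => [|b t IH] //=; rewrite expnS.
case: b => /=; lia.
Qed.

Lemma bv_valE m (x : bv m) : bv_val x = val_s x.
Proof.
rewrite /bv_val.
have -> : (\sum_(i < m) (tnth x i : nat) * 2 ^ (m - i.+1))%N
   = (\sum_(i < size x) (nth false x i : nat) * 2 ^ (size x - i.+1))%N.
  rewrite size_tuple; apply: eq_bigr => i _; by rewrite (tnth_nth false).
elim: (val x) => [|b t IH]; first by rewrite big_ord0.
by rewrite big_ord_recl /= IH subSS subn0.
Qed.

Lemma val_s_bit s i : (i < size s)%N ->
  odd (val_s s %/ 2 ^ (size s - i.+1)) = nth false s i.
Proof.
elim: s i => [|b t IH] i //= Hi.
case: i Hi => [|i] Hi /=.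
  rewrite subn1 /= divnDl ?dvdn_mull // mulnK ?expn_gt0 //.
  rewrite divn_small ?val_s_lt // addn0; by case: b.
rewrite subSS -IH; last by [].
have Hit : (i < size t)%N by [].
set e := (size t - i.+1)%N.
have -> : (2 ^ size t = 2 ^ (size t - e) * 2 ^ e)%N by rewrite -expnD; congr (_ ^ _); rewrite /e; lia.
rewrite mulnA divnMDl ?expn_gt0 // oddD oddM.
have -> : odd (2 ^ (size t - e)) = false.
  have -> : (size t - e = (size t - e).-1.+1)%N by rewrite /e; lia.
  by rewrite expnS oddM.
by rewrite andbF.
Qed.

Lemma bv_of_nat_val m k (s : bv m) : (k %% 2 ^ m = val_s s)%N -> bv_of_nat m k = s.
Proof.
move=> Hk; apply: eq_from_tnth => i; rewrite tnth_mktuple Hk (tnth_nth false).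
have Hs : size s = m by rewrite size_tuple.
have := @val_s_bit s i; rewrite Hs => -> //.
Qed.

Definition maj (a b c : bool) := (a && b) || (a && c) || (b && c).

Fixpoint add_s (c : bool) (x y : seq bool) : bool * seq bool :=
  match x, y with
  | b :: x', d :: y' =>
      let p := add_s c x' y' in (maj b d p.1, (b (+) d (+) p.1) :: p.2)
  | _, _ => (c, [::])
  end.

Lemma add_s_size c x y : size x = size y -> size (add_s c x y).2 = size x.
Proof. by elim: x y => [|b x IH] [|d y] //= [/IH ->]. Qed.

Lemma add_s_val (c : bool) x y : size x = size y ->
  (val_s x + val_s y + c = (add_s c x y).1 * 2 ^ size x + val_s (add_s c x y).2)%N.
Proof.
elim: x y => [|b x IH] [|d y] //=; first by rewrite addnC /= muln1.
move=> [Hs]; have := IH _ Hs; rewrite add_s_size // Hs.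
case: (add_s c x y) => c' s /= E.
rewrite expnS.
have : (val_s x + val_s y + c = c' * 2 ^ size y + val_s s)%N by rewrite E.
clear E; move: (2 ^ size y)%N => P.
by case: b; case: d; case: c'; rewrite /maj /=; lia.
Qed.

Lemma bv_addE m (x y : bv m) : val (bv_add x y) = (add_s false x y).2.
Proof.
have Hs : size (add_s false x y).2 == m by rewrite add_s_size ?size_tuple.
rewrite /bv_add (@bv_of_nat_val m _ (Tuple Hs)) //=.
rewrite !bv_valE.
have := @add_s_val false x y; rewrite addn0 => -> //; last by rewrite !size_tuple.
rewrite size_tuple modnMDl modn_small //.
by have := val_s_lt (add_s false x y).2; rewrite (eqP Hs).
Qed.

Definition xor_s (s t : seq bool) := map (fun p => p.1 (+) p.2) (zip s t).

Lemma bv_xorE m (x y : bv m) : val (bv_xor x y) = xor_s x y.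
Proof.
apply: (@eq_from_nth _ false).
  by rewrite size_tuple size_map size_zip !size_tuple minnn.
move=> i; rewrite size_tuple => Hi.
rewrite -[i]/(nat_of_ord (Ordinal Hi)) -tnth_nth tnth_mktuple.
rewrite (nth_map (false, false)) ?size_zip ?size_tuple ?minnn //.
by rewrite nth_zip ?size_tuple //= !(tnth_nth false).
Qed.

Lemma bv_catE n p q (x : bv p) (y : bv q) : (p + q = n)%N -> val (bv_cat n x y) = x ++ y.
Proof.
move=> H; apply: (@eq_from_nth _ false).
  by rewrite size_tuple size_cat !size_tuple.
move=> i; rewrite size_tuple => Hi.
by rewrite -[i]/(nat_of_ord (Ordinal Hi)) -tnth_nth tnth_mktuple.
Qed.

Lemma bv_rotlE m r (x : bv m) : val (bv_rotl r x) = rot r x.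
Proof. by []. Qed.

Lemma add_s_cat c x1 x2 y1 y2 : size x1 = size y1 -> size x2 = size y2 ->
  add_s c (x1 ++ x2) (y1 ++ y2) =
  let p := add_s c x2 y2 in let q := add_s p.1 x1 y1 in (q.1, q.2 ++ p.2).
Proof.
move=> H1 H2; elim: x1 y1 H1 => [|b x IH] [|d y] //=.
  by case: x2 y2 H2 => [|? ?] [|? ?] //=; case: (add_s _ _ _).
by move=> [/IH ->].
Qed.

Lemma xor_s_cat x1 x2 y1 y2 : size x1 = size y1 ->
  xor_s (x1 ++ x2) (y1 ++ y2) = xor_s x1 y1 ++ xor_s x2 y2.
Proof. by move=> H; rewrite /xor_s zip_cat // map_cat. Qed.

Lemma xor_s_size x y : size x = size y -> size (xor_s x y) = size x.
Proof. by move=> H; rewrite size_map size_zip H minnn. Qed.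



Notation ord8 := ord8_of_bits.

Lemma bit0_8E a b c : bit0_8 (ord8 a b c) = a.
Proof. by case: a; case: b; case: c; rewrite /bit0_8 /ord8_of_bits inordK. Qed.
Lemma bit1_8E a b c : bit1_8 (ord8 a b c) = b.
Proof. by case: a; case: b; case: c; rewrite /bit1_8 /ord8_of_bits inordK. Qed.
Lemma bit2_8E a b c : bit2_8 (ord8 a b c) = c.
Proof. by case: a; case: b; case: c; rewrite /bit2_8 /ord8_of_bits inordK. Qed.
Lemma ord8_eta (i : 'I_8) : ord8 (bit0_8 i) (bit1_8 i) (bit2_8 i) = i.
Proof. by apply/val_inj; case: i => [[|[|[|[|[|[|[|[|]]]]]]]]] //= Hi; rewrite /ord8_of_bits inordK. Qed.
Lemma xor8E a b c d e f : xor8 (ord8 a b c) (ord8 d e f) = ord8 (a (+) d) (b (+) e) (c (+) f).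
Proof. by rewrite /xor8 !bit0_8E !bit1_8E !bit2_8E. Qed.

Definition step (a b g u v : bool) (c : 'I_8) : option 'I_8 :=
  if a (+) b (+) g (+) bit0_8 c (+) bit1_8 c (+) bit2_8 c then None
  else Some (ord8 (maj u a (bit0_8 c)) (maj v b (bit1_8 c)) (maj (u (+) v) g (bit2_8 c))).

Definition cnt a b g (i k : 'I_8) : nat :=
  ((step a b g false false k == Some i) + (step a b g false true k == Some i)
  + (step a b g true false k == Some i) + (step a b g true true k == Some i))%N.

Definition bools := [:: true; false].
Definition b0n (i : nat) := odd (i %/ 4).
Definition b1n (i : nat) := odd (i %/ 2).
Definition b2n (i : nat) := odd i.
Definition o8n (a b c : bool) : nat := (4 * a + 2 * b + c)%N.
Definition xorn (i k : nat) : nat := o8n (b0n i (+) b0n k) (b1n i (+) b1n k) (b2n i (+) b2n k).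
Definition stepn (a b g u v : bool) (c : nat) : option nat :=
  if a (+) b (+) g (+) b0n c (+) b1n c (+) b2n c then None
  else Some (o8n (maj u a (b0n c)) (maj v b (b1n c)) (maj (u (+) v) g (b2n c))).
Definition cntn a b g (i k : nat) : nat :=
  ((stepn a b g false false k == Some i) + (stepn a b g false true k == Some i)
  + (stepn a b g true false k == Some i) + (stepn a b g true true k == Some i))%N.

Lemma A0_check_b : all (fun a => all (fun b => all (fun g => all (fun i => all (fun k =>
  nth 0%N (nth [::] A0_rows (xorn i (o8n a b g))) (xorn k (o8n a b g)) == cntn a b g i k)
  (iota 0 8)) (iota 0 8)) bools) bools) bools.
Proof. by vm_compute. Qed.

Lemma val_ord8 a b c : nat_of_ord (ord8 a b c) = o8n a b c.
Proof. by rewrite /ord8_of_bits inordK //; case: a; case: b; case: c. Qed.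

Lemma val_xor8 (i k : 'I_8) : nat_of_ord (xor8 i k) = xorn i k.
Proof. by rewrite /xor8 val_ord8. Qed.

Lemma stepE a b g u v (k : 'I_8) : omap val (step a b g u v k) = stepn a b g u v k.
Proof. by rewrite /step /stepn; case: ifP => //= _; rewrite val_ord8. Qed.

Lemma step_eq a b g u v (k i : 'I_8) :
  (step a b g u v k == Some i) = (stepn a b g u v k == Some (val i)).
Proof.
by rewrite -stepE; case: (step _ _ _ _ _ _).
Qed.

Lemma A0_check a b g (i k : 'I_8) :
  nth 0%N (nth [::] A0_rows (xor8 i (ord8 a b g))) (xor8 k (ord8 a b g)) = cnt a b g i k.
Proof.
rewrite /cnt !step_eq !val_xor8 !val_ord8.
have Ha : a \in bools by case: a.
have Hb : b \in bools by case: b.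
have Hg : g \in bools by case: g.
have Hi : nat_of_ord i \in iota 0 8 by rewrite mem_iota add0n ltn_ord.
have Hk : nat_of_ord k \in iota 0 8 by rewrite mem_iota add0n ltn_ord.
apply/eqP; move: A0_check_b => /allP /(_ a Ha) /allP /(_ b Hb) /allP /(_ g Hg)
  /allP /(_ i Hi) /allP /(_ k Hk) //.
Qed.

Local Open Scope ring_scope.

Fixpoint run (al be ga x y : seq bool) (j : 'I_8) : option 'I_8 :=
  match al, be, ga, x, y with
  | a :: al', b :: be', g :: ga', u :: x', v :: y' =>
      obind (step a b g u v) (run al' be' ga' x' y' j)
  | _, _, _, _, _ => Some j
  end.

Fixpoint Aprod_s (al be ga : seq bool) : 'M[rat]_8 :=
  match al, be, ga with
  | a :: al', b :: be', g :: ga' => Amat (ord8 a b g) * Aprod_s al' be' ga'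
  | _, _, _ => 1
  end.

Lemma AprodE m (al be ga : bv m) : Aprod al be ga = Aprod_s al be ga.
Proof.
rewrite /Aprod.
have -> : \prod_(i < m) Amat (omega al be ga i) =
  \prod_(i < m) Amat (ord8 (nth false al i) (nth false be i) (nth false ga i)).
  by apply: eq_bigr => i _; rewrite /omega !(tnth_nth false).
have H : forall m (sa sb sg : seq bool), size sa = m -> size sb = m -> size sg = m ->
  \prod_(i < m) Amat (ord8 (nth false sa i) (nth false sb i) (nth false sg i))
  = Aprod_s sa sb sg.
  elim=> [|k IH] [|a sa] [|b sb] [|g sg] //=; first by rewrite big_ord0.
  move=> [Ha] [Hb] [Hg]; rewrite big_ord_recl /=; congr (_ * _).
  by rewrite -IH //; apply: eq_bigr => i _.
by apply: H; rewrite size_tuple.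
Qed.

Lemma sum_tuple_cons (R : nmodType) m (F : bv m.+1 -> R) :
  \sum_(x : bv m.+1) F x = \sum_(b : bool) \sum_(x : bv m) F [tuple of b :: x].
Proof.
rewrite pair_big /=.
rewrite (reindex (fun p : bool * bv m => [tuple of p.1 :: p.2])) //=.
exists (fun x : bv m.+1 => (thead x, [tuple of behead x])) => [[b x] _|x _] /=.
  by congr (_, _); apply/val_inj.
by rewrite [in RHS](tuple_eta x).
Qed.

Lemma obind_sum (o : option 'I_8) (f : 'I_8 -> option 'I_8) (i : 'I_8) :
  ((obind f o == Some i) : nat) = (\sum_(k < 8) (o == Some k) * (f k == Some i))%N.
Proof.
case: o => [k0|] /=.
  rewrite (bigD1 k0) //= eqxx mul1n big1 ?addn0 // => k Hk.
  by case: eqP => [[E]|] //; rewrite E eqxx in Hk.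
by rewrite big1.
Qed.

Lemma AmatE a b g (i k : 'I_8) : Amat (ord8 a b g) i k = (cnt a b g i k)%:R / 4.
Proof. by rewrite /Amat !mxE -A0_check. Qed.

Lemma sum_tuple0 (R : nmodType) (F : bv 0 -> R) : \sum_(x : bv 0) F x = F [tuple].
Proof. by rewrite (big_pred1 [tuple]) // => x; rewrite /= [x]tuple0; apply/esym/eqP. Qed.

Lemma sum_tuple_cons2 (R : nmodType) m (F : bv m.+1 -> bv m.+1 -> R) :
  \sum_(x : bv m.+1) \sum_(y : bv m.+1) F x y =
  \sum_(u : bool) \sum_(x : bv m) \sum_(v : bool) \sum_(y : bv m) F [tuple of u :: x] [tuple of v :: y].
Proof.
rewrite sum_tuple_cons; apply: eq_bigr => u _; apply: eq_bigr => x _; exact: sum_tuple_cons.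
Qed.

Lemma cntE a b g i k : (cnt a b g i k)%:R =
  \sum_(u : bool) \sum_(v : bool) ((step a b g u v k == Some i) : nat)%:R :> rat.
Proof. rewrite !big_bool /cnt !natrD /=; ring. Qed.

Lemma runM m (al be ga : bv m) (i j : 'I_8) :
  Aprod_s al be ga i j * 4 ^+ m =
  \sum_(x : bv m) \sum_(y : bv m) ((run al be ga x y j == Some i) : nat)%:R.
Proof.
elim: m al be ga i j => [|m IH] al be ga i j.
  rewrite !sum_tuple0 !tuple0 /= expr0 mulr1 mxE.
  by rewrite eq_sym; case: (i == j).
rewrite (tuple_eta al) (tuple_eta be) (tuple_eta ga) /=.
set a := thead al; set b := thead be; set g := thead ga.
have IH' := IH [tuple of behead al] [tuple of behead be] [tuple of behead ga].
rewrite /= in IH'.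
rewrite -mulmxE mxE big_distrl /=.
have E4 : forall c p q : rat, c / 4 * p * (4 * q) = c * (p * q) by move=> c p q; field.
under eq_bigr => k _ do rewrite AmatE exprS E4 IH' cntE big_distrl /=.
rewrite sum_tuple_cons2 /=; symmetry.
under eq_bigr => u _ do under eq_bigr => x _ do under eq_bigr => v _ do
  under eq_bigr => y _ do rewrite obind_sum natr_sum.
under eq_bigr => u _ do rewrite exchange_big.
under eq_bigr => u _ do under eq_bigr => v _ do under eq_bigr => x _ do rewrite exchange_big.
under eq_bigr => u _ do under eq_bigr => v _ do rewrite exchange_big.
under eq_bigr => u _ do rewrite exchange_big.
rewrite exchange_big; apply: eq_bigr => k _.
apply: eq_bigr => u _; rewrite big_distrl; apply: eq_bigr => v _ /=.
rewrite big_distrr; apply: eq_bigr => x _ /=.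
rewrite big_distrr; apply: eq_bigr => y _ /=.
by rewrite natrM mulrC.
Qed.

Lemma xor8K (i s : 'I_8) : xor8 (xor8 i s) s = i.
Proof.
rewrite -(ord8_eta i) -(ord8_eta s) !xor8E -!addbA !addbb !addbF.
by rewrite !ord8_eta.
Qed.

Lemma xor8A (i k s : 'I_8) : xor8 i (xor8 k s) = xor8 (xor8 i s) k.
Proof.
rewrite -(ord8_eta i) -(ord8_eta s) -(ord8_eta k) !xor8E.
by rewrite !addbA; congr ord8; rewrite addbAC.
Qed.

Lemma Amat_xor (K s i k : 'I_8) : Amat (xor8 K s) i k = Amat K (xor8 i s) (xor8 k s).
Proof. by rewrite /Amat !mxE !xor8A. Qed.

Lemma Aprod_sym (s0 s1 s2 : bool) al be ga (i j : 'I_8) :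
  size be = size al -> size ga = size al ->
  Aprod_s (map (addb s0) al) (map (addb s1) be) (map (addb s2) ga) i j =
  Aprod_s al be ga (xor8 i (ord8 s0 s1 s2)) (xor8 j (ord8 s0 s1 s2)).
Proof.
set s := ord8 s0 s1 s2.
elim: al be ga i j => [|a al IH] [|b be] [|g ga] i j //= Hb Hg; try by [].
  have Hinj : injective (fun k => xor8 k s).
    by move=> x y /(congr1 (fun k => xor8 k s)); rewrite !xor8K.
  by rewrite !mxE (inj_eq Hinj).
case: Hb Hg => Hb [Hg].
rewrite -!mulmxE !mxE.
have Hinj : injective (fun k => xor8 k s).
  by move=> x y /(congr1 (fun k => xor8 k s)); rewrite !xor8K.
rewrite (reindex_inj Hinj) /=.
apply: eq_bigr => k _.
have -> : ord8 (s0 (+) a) (s1 (+) b) (s2 (+) g) = xor8 (ord8 a b g) s.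
  by rewrite xor8E ![addb _ s0]addbC ![addb _ s1]addbC ![addb _ s2]addbC.
by rewrite Amat_xor IH // xor8K.
Qed.

Definition par8 (j : 'I_8) := bit0_8 j (+) bit1_8 j (+) bit2_8 j.

Lemma run_parity al be ga x y j i :
  size be = size al -> size ga = size al -> size x = size al -> size y = size al ->
  al != [::] -> run al be ga x y j = Some i ->
  last false al (+) last false be (+) last false ga = par8 j.
Proof.
elim: al be ga x y i => [|a al IH] [|b be] [|g ga] [|u x] [|v y] i //= [Hb] [Hg] [Hx] [Hy] _.
case: al IH Hb Hg Hx Hy => [|a' al] IH Hb Hg Hx Hy.
  case: be ga x y Hb Hg Hx Hy => // [] [] // [] // [] // _ _ _ _ /=.
  rewrite /step /par8; case: ifP => // H _.
  by move: H; case: a; case: b; case: g; case: (bit0_8 j); case: (bit1_8 j); case: (bit2_8 j).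
case: be ga x y Hb Hg Hx Hy => // b' be [] // g' ga [] // u' x [] // v' y Hb Hg Hx Hy.
case E : (run _ _ _ _ _ j) => [k|] //= _.
by rewrite -(IH _ _ _ _ _ Hb Hg Hx Hy _ E).
Qed.

Lemma Aprod_par m (al be ga : bv m) (i j : 'I_8) : (0 < m)%N ->
  last false al (+) last false be (+) last false ga != par8 j ->
  Aprod_s al be ga i j = 0.
Proof.
move=> Hm Hp.
have : Aprod_s al be ga i j * 4 ^+ m = 0.
  rewrite runM big1 // => x _; rewrite big1 // => y _.
  case E : (run _ _ _ _ _ _ == _) => //.
  move/eqP: E => /run_parity; rewrite !size_tuple => /(_ erefl erefl erefl erefl).
  have : val al != [::] by rewrite -size_eq0 size_tuple -lt0n.
  by move=> Hn /(_ Hn) H; rewrite H eqxx in Hp.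
by move/eqP; rewrite mulf_eq0 expf_eq0 pnatr_eq0 andbF orbF => /eqP.
Qed.

Lemma xor_s_cons a x b y : xor_s (a :: x) (b :: y) = (a (+) b) :: xor_s x y.
Proof. by []. Qed.

Lemma runE al be ga x y j :
  size be = size al -> size ga = size al -> size x = size al -> size y = size al ->
  run al be ga x y j =
  if xor_s (add_s (bit0_8 j) x al).2 (add_s (bit1_8 j) y be).2
       == (add_s (bit2_8 j) (xor_s x y) ga).2
  then Some (ord8_of_bits (add_s (bit0_8 j) x al).1 (add_s (bit1_8 j) y be).1
                  (add_s (bit2_8 j) (xor_s x y) ga).1)
  else None.
Proof.
elim: al be ga x y => [|a al IH] [|b be] [|g ga] [|u x] [|v y] //= Hb Hg Hx Hy.
  by rewrite ord8_eta.
move: Hb Hg Hx Hy => [Hb] [Hg] [Hx] [Hy].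
rewrite (IH _ _ _ _ Hb Hg Hx Hy) xor_s_cons eqseq_cons.
case: (_ == _) => /=; last by rewrite andbF.
rewrite andbT /step !bit0_8E !bit1_8E !bit2_8E.
move: (add_s (bit0_8 j) x al).1 (add_s (bit1_8 j) y be).1 (add_s (bit2_8 j) (xor_s x y) ga).1 => c1 c2 c3.
by case: a; case: b; case: g; case: c1; case: c2; case: c3; case: u; case: v.
Qed.
Local Open Scope ring_scope.

Definition split_top r m (x : bv (r + m)) : bv r := [tuple nth false x i | i < r].
Definition split_low r m (x : bv (r + m)) : bv m := [tuple nth false x (r + i) | i < m].

Lemma sum_split (R : nmodType) n r m (F : bv n -> R) : (r + m = n)%N ->
  \sum_(x : bv n) F x = \sum_(u : bv r) \sum_(v : bv m) F (bv_cat n u v).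
Proof.
move=> E; subst n.
rewrite pair_big /=.
rewrite (reindex (fun p : bv r * bv m => bv_cat (r + m) p.1 p.2)) //=.
exists (fun x => (split_top x, split_low x)) => [[u v] _|x _] /=.
  congr (_, _); apply: eq_from_tnth => i; rewrite tnth_mktuple.
    by rewrite (tnth_nth false) bv_catE // nth_cat size_tuple ltn_ord.
  by rewrite (tnth_nth false) bv_catE // nth_cat size_tuple ltnNge leq_addr /= addKn.
apply: eq_from_tnth => i; rewrite tnth_mktuple (tnth_nth false) nth_cat size_tuple /split_top /split_low.
case: ltnP => H.
  by rewrite -[i : nat]/(nat_of_ord (Ordinal H)) -tnth_nth tnth_mktuple.
have H' : (i - r < m)%N by have := ltn_ord i; lia.
by rewrite -[(i - r)%N]/(nat_of_ord (Ordinal H')) -tnth_nth tnth_mktuple /= subnKC.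
Qed.

Lemma eq_tupleE n (X Y : bv n) : (X == Y) = (tval X == tval Y).
Proof. by []. Qed.
Lemma tbv_addE m (x y : bv m) : tval (bv_add x y) = (add_s false x y).2.
Proof. exact: bv_addE. Qed.
Lemma tbv_xorE m (x y : bv m) : tval (bv_xor x y) = xor_s x y.
Proof. exact: bv_xorE. Qed.
Lemma tbv_rotlE m r (x : bv m) : tval (bv_rotl r x) = rot r x.
Proof. by []. Qed.
Lemma tbv_catE n p q (x : bv p) (y : bv q) : (p + q = n)%N -> tval (bv_cat n x y) = x ++ y.
Proof. exact: bv_catE. Qed.

Lemma cond_split n r m (u1 u2 : bv r) (v1 v2 : bv m) (al be ga : bv m) (al' be' ga' : bv r) :
  (r + m = n)%N ->
  (bv_rotl r (bv_xor (bv_add (bv_cat n u1 v1) (bv_cat n al' al))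
                     (bv_add (bv_cat n u2 v2) (bv_cat n be' be)))
   == bv_add (bv_rotl r (bv_xor (bv_cat n u1 v1) (bv_cat n u2 v2))) (bv_cat n ga ga'))
  = (xor_s (add_s false v1 al).2 (add_s false v2 be).2
       == (add_s (add_s false (xor_s u1 u2) ga').1 (xor_s v1 v2) ga).2)
    && (xor_s (add_s (add_s false v1 al).1 u1 al').2 (add_s (add_s false v2 be).1 u2 be').2
       == (add_s false (xor_s u1 u2) ga').2).
Proof.
move=> E.
have E' : (m + r = n)%N by rewrite addnC.
rewrite eq_tupleE !tbv_rotlE !tbv_xorE !tbv_addE ?tbv_xorE ?tbv_rotlE ?tbv_xorE !(tbv_catE _ _ E) !(tbv_catE _ _ E').
have Su : size u1 = size u2 by rewrite !size_tuple.
have Sv : size v1 = size v2 by rewrite !size_tuple.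
rewrite (xor_s_cat v1 v2 Su).
have Rot : forall (s1 s2 : seq bool), size s1 = r -> rot r (s1 ++ s2) = s2 ++ s1.
  by move=> s1 s2 <-; exact: rot_size_cat.
rewrite (Rot (xor_s u1 u2)); last by rewrite xor_s_size ?size_tuple.
rewrite (@add_s_cat false u1 v1 al' al) ?size_tuple //.
rewrite (@add_s_cat false u2 v2 be' be) ?size_tuple //.
rewrite (@add_s_cat false (xor_s v1 v2) (xor_s u1 u2) ga ga') ?xor_s_size ?size_tuple //=.
rewrite xor_s_cat; last by rewrite !add_s_size ?size_tuple.
rewrite Rot; last by rewrite xor_s_size !add_s_size ?size_tuple.
rewrite eqseq_cat //.
by rewrite xor_s_size !add_s_size ?xor_s_size ?size_tuple.
Qed.

Lemma sum_opt (F : 'I_8 -> rat) (o : option 'I_8) :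
  \sum_(l < 8) ((o == Some l) : nat)%:R * F l = oapp F 0 o.
Proof.
case: o => [k|] /=; last by rewrite big1 // => l _; rewrite mul0r.
rewrite (bigD1 k) //= eqxx mul1r big1 ?addr0 // => l Hl.
by case: eqP => [[E]|]; [rewrite E eqxx in Hl | rewrite mul0r].
Qed.

Lemma ind_split r m (u1 u2 : bv r) (v1 v2 : bv m) (al be ga : bv m) (al' be' ga' : bv r) :
  (((xor_s (add_s false v1 al).2 (add_s false v2 be).2
       == (add_s (add_s false (xor_s u1 u2) ga').1 (xor_s v1 v2) ga).2)
    && (xor_s (add_s (add_s false v1 al).1 u1 al').2 (add_s (add_s false v2 be).1 u2 be').2
       == (add_s false (xor_s u1 u2) ga').2)) : nat)%:R
  = \sum_(i < 8) \sum_(l < 8)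
    ((run al be ga v1 v2 (ord8_of_bits false false (bit2_8 l)) == Some i) : nat)%:R *
    ((run al' be' ga' u1 u2 (ord8_of_bits (bit0_8 i) (bit1_8 i) false) == Some l) : nat)%:R :> rat.
Proof.
have S1 : size be = size al by rewrite !size_tuple.
have S2 : size ga = size al by rewrite !size_tuple.
have S3 : size v1 = size al by rewrite !size_tuple.
have S4 : size v2 = size al by rewrite !size_tuple.
have T1 : size be' = size al' by rewrite !size_tuple.
have T2 : size ga' = size al' by rewrite !size_tuple.
have T3 : size u1 = size al' by rewrite !size_tuple.
have T4 : size u2 = size al' by rewrite !size_tuple.
under eq_bigr => i _ do under eq_bigr => l _ do rewrite mulrC.
under eq_bigr => i _ do rewrite sum_opt (@runE _ _ _ _ _ _ T1 T2 T3 T4) !bit0_8E !bit1_8E !bit2_8E.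
set c0 := (add_s false (xor_s u1 u2) ga').1.
set Top := fun i : 'I_8 => xor_s (add_s (bit0_8 i) u1 al').2 (add_s (bit1_8 i) u2 be').2
       == (add_s false (xor_s u1 u2) ga').2.
transitivity (\sum_(i < 8) ((run al be ga v1 v2 (ord8_of_bits false false c0) == Some i) : nat)%:R
   * ((Top i) : nat)%:R : rat).
  rewrite sum_opt (@runE _ _ _ _ _ _ S1 S2 S3 S4) !bit0_8E !bit1_8E !bit2_8E.
  by case: (_ == _) => //=; rewrite /Top !bit0_8E !bit1_8E.
apply: eq_bigr => i _; rewrite mulrC /Top.
case: (_ == _) => /=; last by rewrite mul0r.
by rewrite mul1r bit2_8E.
Qed.

Lemma sum_split2 n r m (F : bv n -> bv n -> rat) : (r + m = n)%N ->
  \sum_(x : bv n) \sum_(y : bv n) F x y =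
  \sum_(u1 : bv r) \sum_(v1 : bv m) \sum_(u2 : bv r) \sum_(v2 : bv m)
    F (bv_cat n u1 v1) (bv_cat n u2 v2).
Proof.
move=> E; rewrite (@sum_split rat _ _ _ _ E); apply: eq_bigr => u1 _; apply: eq_bigr => v1 _.
exact: (@sum_split rat _ _ _ _ E).
Qed.

Lemma sum6 (T1 T2 T3 T4 : finType) (F : T1 -> T2 -> T3 -> T4 -> 'I_8 -> 'I_8 -> rat) :
  \sum_a \sum_b \sum_c \sum_d \sum_(i < 8) \sum_(l < 8) F a b c d i l =
  \sum_(i < 8) \sum_(l < 8) \sum_b \sum_d \sum_a \sum_c F a b c d i l.
Proof.
under eq_bigr => a _ do under eq_bigr => b _ do under eq_bigr => c _ do rewrite exchange_big.
under eq_bigr => a _ do under eq_bigr => b _ do under eq_bigr => c _ do under eq_bigr => i _ do rewrite exchange_big.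
under eq_bigr => a _ do under eq_bigr => b _ do rewrite exchange_big.
under eq_bigr => a _ do under eq_bigr => b _ do under eq_bigr => i _ do rewrite exchange_big.
under eq_bigr => a _ do rewrite exchange_big.
under eq_bigr => a _ do under eq_bigr => i _ do rewrite exchange_big.
rewrite exchange_big.
under eq_bigr => i _ do rewrite exchange_big.
apply: eq_bigr => i _; apply: eq_bigr => l _.
rewrite exchange_big; apply: eq_bigr => b _.
rewrite exchange_big.
under eq_bigr => c _ do rewrite exchange_big.
rewrite exchange_big; apply: eq_bigr => d _.
by rewrite exchange_big.
Qed.

Lemma sum6' (T1 T2 T3 T4 : finType) (G : T1 -> T2 -> T3 -> T4 -> rat) (F : T1 -> T2 -> T3 -> T4 -> 'I_8 -> 'I_8 -> rat) :
  (forall a b c d, G a b c d = \sum_(i < 8) \sum_(l < 8) F a b c d i l) ->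
  \sum_a \sum_b \sum_c \sum_d G a b c d =
  \sum_(i < 8) \sum_(l < 8) \sum_b \sum_d \sum_a \sum_c F a b c d i l.
Proof.
move=> H; rewrite -sum6; apply: eq_bigr => a _; apply: eq_bigr => b _.
by apply: eq_bigr => c _; apply: eq_bigr => d _.
Qed.

Lemma lhs_formula n r m (al be ga : bv m) (al' be' ga' : bv r) : (r + m = n)%N ->
  adpXR r (bv_cat n al' al) (bv_cat n be' be) (bv_cat n ga ga') =
  \sum_(i < 8) \sum_(l < 8)
     Aprod_s al be ga i (ord8_of_bits false false (bit2_8 l)) *
     Aprod_s al' be' ga' l (ord8_of_bits (bit0_8 i) (bit1_8 i) false).
Proof.
move=> E.
rewrite /adpXR.
set P := fun xy : bv n * bv n => _.
have -> : #|[set xy | P xy]| = (\sum_(xy : bv n * bv n) (P xy : nat))%N.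
  rewrite -sum1_card big_mkcond /=; apply: eq_bigr => xy _.
  by rewrite inE; case: (P xy).
rewrite natr_sum.
rewrite -(pair_bigA _ (fun x y => ((P (x, y)) : nat)%:R)) /=.
rewrite (sum_split2 _ E).
rewrite /P /=.
erewrite sum6'; last first.
  move=> u1 v1 u2 v2; rewrite (cond_split _ _ _ _ _ _ _ _ _ _ E) ind_split; reflexivity.

have E4 : (4 ^+ n = 4 ^+ m * 4 ^+ r :> rat) by rewrite -exprD addnC E.
rewrite E4 mulr_suml; apply: eq_bigr => i _; rewrite mulr_suml; apply: eq_bigr => l _.
have HH : forall x y : rat, x * y = (x * 4 ^+ m) * (y * 4 ^+ r) / (4 ^+ m * 4 ^+ r).
  by move=> x y; field; rewrite !expf_neq0.
rewrite [RHS]HH !runM; congr (_ / _).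
rewrite big_distrl; apply: eq_bigr => v1 _ /=.
rewrite big_distrl; apply: eq_bigr => v2 _ /=.
rewrite big_distrr; apply: eq_bigr => u1 _ /=.
by rewrite big_distrr; apply: eq_bigr => u2 _ /=.
Qed.

Lemma entry (L : 'rV[rat]_8) (M : 'M[rat]_8) : (L *m M *m e0T) 0 0 = \sum_(k < 8) L 0 k * M k 0.
Proof.
rewrite -mulmxA mxE; apply: eq_bigr => k _; rewrite mxE (bigD1 0) //= big1.
  by rewrite /e0T mxE !eqxx mulr1 addr0.
by move=> l Hl; rewrite /e0T mxE (negbTE Hl) /= mulr0.
Qed.

Lemma sum_I8 (F : 'I_8 -> rat) :
  \sum_(k < 8) F k = \sum_(b0 : bool) \sum_(b1 : bool) \sum_(b2 : bool) F (ord8_of_bits b0 b1 b2).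
Proof.
rewrite pair_big pair_big /=.
rewrite (reindex (fun p : bool * bool * bool => ord8_of_bits p.1.1 p.1.2 p.2)) //=.
exists (fun k => (bit0_8 k, bit1_8 k, bit2_8 k)) => [[[b0 b1] b2] _|k _] /=.
  by rewrite bit0_8E bit1_8E bit2_8E.
by rewrite ord8_eta.
Qed.

Lemma tbv_condE m c (x : bv m) : tval (bv_cond c x) = map (addb c) x.
Proof.
rewrite /bv_cond; case: c => /=; last by rewrite map_id.
by apply: eq_map => b.
Qed.

Lemma tbv_complE m (x : bv m) : tval (bv_compl x) = map (addb true) x.
Proof. by apply: eq_map. Qed.

Lemma map_addbF (s : seq bool) : map (addb false) s = s.
Proof. exact: map_id. Qed.

Lemma sym_low c al be ga (i j : 'I_8) : size be = size al -> size ga = size al ->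
  Aprod_s al be (map (addb c) ga) i j =
  Aprod_s al be ga (xor8 i (ord8_of_bits false false c)) (xor8 j (ord8_of_bits false false c)).
Proof. by move=> H1 H2; rewrite -Aprod_sym // !map_addbF. Qed.

Lemma sym_top0 c al be ga (i j : 'I_8) : size be = size al -> size ga = size al ->
  Aprod_s (map (addb c) al) be ga i j =
  Aprod_s al be ga (xor8 i (ord8_of_bits c false false)) (xor8 j (ord8_of_bits c false false)).
Proof. by move=> H1 H2; rewrite -Aprod_sym // !map_addbF. Qed.

Lemma sym_top1 c al be ga (i j : 'I_8) : size be = size al -> size ga = size al ->
  Aprod_s (map (addb c) al) (map (addb true) be) ga i j =
  Aprod_s al be ga (xor8 i (ord8_of_bits c true false)) (xor8 j (ord8_of_bits c true false)).
Proof. by move=> H1 H2; rewrite -Aprod_sym // !map_addbF. Qed.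

Lemma par8E a b c : par8 (ord8_of_bits a b c) = a (+) b (+) c.
Proof. by rewrite /par8 bit0_8E bit1_8E bit2_8E. Qed.

Lemma ord0_8 : (0 : 'I_8) = ord8_of_bits false false false.
Proof. by apply/val_inj => /=; rewrite val_ord8. Qed.

Lemma padp_eq c d a m (al be ga : bv m) :
  padp c d al be (bv_cond a ga) =
  Aprod_s al be ga (ord8_of_bits c d false) (ord8_of_bits false false a)
  + Aprod_s al be ga (ord8_of_bits c d true) (ord8_of_bits false false a).
Proof.
rewrite /padp entry AprodE tbv_condE.
under eq_bigr => k _ do rewrite sym_low ?size_tuple //.
rewrite sum_I8 !big_bool /= ord0_8 !xor8E /=.
case: c; case: d; case: a; rewrite /L_ab /row8 !mxE !val_ord8 /=;
  rewrite ?mul0r ?mul1r ?add0r ?addr0 //; exact: addrC.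
Qed.

Lemma cadp_eq0 c u m (al be ga : bv m) :
  cadp c (bv_cond u al) be ga =
  Aprod_s al be ga (ord8_of_bits false false c) (ord8_of_bits u false false)
  + Aprod_s al be ga (ord8_of_bits false true c) (ord8_of_bits u false false)
  + Aprod_s al be ga (ord8_of_bits true false c) (ord8_of_bits u false false)
  + Aprod_s al be ga (ord8_of_bits true true c) (ord8_of_bits u false false).
Proof.
rewrite /cadp entry AprodE tbv_condE.
under eq_bigr => k _ do rewrite sym_top0 ?size_tuple //.
rewrite sum_I8 !big_bool /= ord0_8 !xor8E /=.
case: c; case: u; rewrite /L_c /row8 !mxE !val_ord8 /=;
  rewrite ?mul0r ?mul1r ?add0r ?addr0; ring.
Qed.

Lemma cadp_eq1 c u m (al be ga : bv m) :
  cadp c (bv_cond u (bv_compl al)) (bv_compl be) ga =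
  Aprod_s al be ga (ord8_of_bits false false c) (ord8_of_bits (~~ u) true false)
  + Aprod_s al be ga (ord8_of_bits false true c) (ord8_of_bits (~~ u) true false)
  + Aprod_s al be ga (ord8_of_bits true false c) (ord8_of_bits (~~ u) true false)
  + Aprod_s al be ga (ord8_of_bits true true c) (ord8_of_bits (~~ u) true false).
Proof.
rewrite /cadp entry AprodE tbv_condE !tbv_complE -map_comp.
have -> : [seq (addb u \o addb true) i | i <- al] = map (addb (~~ u)) al.
  by apply: eq_map => b /=; rewrite addbN addNb.
under eq_bigr => k _ do rewrite sym_top1 ?size_tuple //.
rewrite sum_I8 !big_bool /= ord0_8 !xor8E /=.
case: c; case: u; rewrite /L_c /row8 !mxE !val_ord8 /=;
  rewrite ?mul0r ?mul1r ?add0r ?addr0; ring.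
Qed.

Lemma nth_lastE m (s : bv m) k : k = m.-1 -> nth false s k = last false s.
Proof. by move=> ->; rewrite -nth_last size_tuple. Qed.

Unset Implicit Arguments.

Theorem corollary2 (n r : nat) (hn : (2 <= n)%N) (hr1 : (1 <= r)%N)
  (hr2 : (r <= n - 1)%N)
  (al be ga : bv (n - r)) (al' be' ga' : bv r) :
  let a := nth false al (n - r - 1) (+) nth false be (n - r - 1)
             (+) nth false ga (n - r - 1) in
  let a' := nth false al' (r - 1) (+) nth false be' (r - 1) (+) nth false ga' (r - 1) in
  adpXR r (bv_cat n al' al) (bv_cat n be' be) (bv_cat n ga ga')
  = padp a' false al be (bv_cond a ga) * cadp a (bv_cond a' al') be' ga'
    + padp (~~ a') true al be (bv_cond a ga)
      * cadp a (bv_cond a' (bv_compl al')) (bv_compl be') ga'.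
Proof.
move=> a a'.
have E : (r + (n - r) = n)%N by lia.
have Hm : (0 < n - r)%N by lia.
have HQ : forall i, Aprod_s al be ga i (ord8_of_bits false false (~~ a)) = 0.
  move=> i; apply: Aprod_par => //; rewrite par8E /a.
  rewrite !(@nth_lastE (n - r)) ?subn1 //.
  by case: (_ (+) _ (+) _).
have HT1 : forall l, Aprod_s al' be' ga' l (ord8_of_bits (~~ a') false false) = 0.
  move=> l; apply: Aprod_par => //; rewrite par8E /a'.
  rewrite !(@nth_lastE r) ?subn1 //.
  by case: (_ (+) _ (+) _).
have HT2 : forall l, Aprod_s al' be' ga' l (ord8_of_bits a' true false) = 0.
  move=> l; apply: Aprod_par => //; rewrite par8E /a'.
  rewrite !(@nth_lastE r) ?subn1 //.
  by case: (_ (+) _ (+) _).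
rewrite (lhs_formula _ _ _ _ _ _ E).
rewrite !padp_eq !cadp_eq1 !cadp_eq0.
rewrite !sum_I8 !big_bool !sum_I8 !big_bool !bit0_8E !bit1_8E !bit2_8E.
clearbody a a'.
move: HQ HT1 HT2; case: a; case: a' => /= HQ HT1 HT2; rewrite !HQ !HT1 !HT2; ring.
Qed.
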